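(* There exists a random coverage collaborative learning problem with strategy space $\Theta=\mathbb{R}_+^k$ whose set of envy-free equilibria is non-convex.
   Context: Random coverage: finite domain $\mathcal{X}$; agent $i$ has a distribution $(q_{ix})_{x\in\mathcal{X}}$ on $\mathcal{X}$. For integer sample counts ${\bf m}$, $U_i({\bf m})=1-\frac12\sum_{x\in\mathcal{X}}q_{ix}\prod_{j=1}^k(1-q_{jx})^{m_j}$; for real ${\boldsymbol\theta}\in\mathbb{R}_+^k$, $u_i({\boldsymbol\theta})=\mathbb{E}[U_i({\bf m})]$ where the $m_j$ are independent with $m_j=\lfloor\theta_j\rfloor+\mathrm{Bernoulli}(\theta_j-\lfloor\theta_j\rfloor)$. Each agent has a threshold $\mu_i$; ${\boldsymbol\theta}$ is feasible if $u_i({\boldsymbol\theta})\ge\mu_i$ for all $i$. A feasible ${\boldsymbol\theta}$ is an envy-free equilibrium if there are no $i,j$ with $\theta_j<\theta_i$ and $u_i({\boldsymbol\theta}^{(i,j)})\ge\mu_i$, where ${\boldsymbol\theta}^{(i,j)}$ is ${\boldsymbol\theta}$ with entries $i$ and $j$ swapped. *)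

(* Defs.v *)
From mathcomp Require Import all_boot all_order all_algebra all_fingroup.
From mathcomp Require Import reals.
Set Implicit Arguments. Unset Strict Implicit. Unset Printing Implicit Defensive.
Import Order.TTheory GRing.Theory Num.Theory.
Local Open Scope ring_scope.

Section RandomCoverage.
Variables (R : realType) (k n : nat).
(* Domain X = 'I_n ; agents 'I_k ; q i x = q_{ix}. *)
Variable q : 'I_k -> 'I_n -> R.

Definition is_distribution : Prop :=
  (forall i x, 0 <= q i x) /\ (forall i, \sum_(x < n) q i x = 1).

Definition Ucov (i : 'I_k) (m : 'I_k -> nat) : R :=
  1 - 2^-1 * \sum_(x < n) q i x * \prod_(j < k) (1 - q j x) ^+ (m j).

(* fractional part, for theta >= 0 : theta - floor theta *)
Definition fracp (t : R) : R := t - (Num.truncn t)%:R.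

(* u_i(theta) = E[U_i(m)], m_j = floor theta_j + Bernoulli(frac theta_j)
   independent; expectation written as the finite sum over outcomes b. *)
Definition ucov (i : 'I_k) (theta : 'I_k -> R) : R :=
  \sum_(b : {ffun 'I_k -> bool})
     (\prod_(j < k) (if b j then fracp (theta j) else 1 - fracp (theta j)))
     * Ucov i (fun j => (Num.truncn (theta j) + b j)%N).

Variable mu : 'I_k -> R.

Definition in_strategy_space (theta : 'I_k -> R) : Prop :=
  forall j, 0 <= theta j.

Definition feasible (theta : 'I_k -> R) : Prop :=
  forall i, mu i <= ucov i theta.

Definition swap (theta : 'I_k -> R) (i j : 'I_k) : 'I_k -> R :=
  fun l => theta (tperm i j l).

Definition envy_free_eq (theta : 'I_k -> R) : Prop :=
  in_strategy_space theta /\ feasible theta /\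
  ~ (exists i j, theta j < theta i /\ mu i <= ucov i (swap theta i j)).

Definition convex_set (S : ('I_k -> R) -> Prop) : Prop :=
  forall t1 t2 (l : R), S t1 -> S t2 -> 0 <= l <= 1 ->
    S (fun j => l * t1 j + (1 - l) * t2 j).

End RandomCoverage.

(* Main.v *)
Require Import Defs.
From mathcomp Require Import all_boot all_order all_algebra all_fingroup.
From mathcomp Require Import reals ring lra.
Import Order.TTheory GRing.Theory Num.Theory.
Local Open Scope ring_scope.
Lemma truncn_natr (R : realType) (m : nat) : Num.truncn (m%:R : R) = m.
Proof. by apply: truncn_def; rewrite lexx ltr_nat ltnSn. Qed.

Lemma Ucov_ext (R : realType) k n (q : 'I_k -> 'I_n -> R) i m1 m2 :
  (forall j, m1 j = m2 j) -> Ucov q i m1 = Ucov q i m2.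
Proof.
by move=> H; rewrite /Ucov; congr (_ - _ * _); apply: eq_bigr => x _; congr (_ * _); apply: eq_bigr => j _; rewrite H.
Qed.

Lemma ucov_nat (R : realType) k n (q : 'I_k -> 'I_n -> R) i theta (f : 'I_k -> nat) :
  (forall j, theta j = (f j)%:R) -> ucov q i theta = Ucov q i f.
Proof.
move=> Hf; rewrite /ucov (bigD1 [ffun=> false]) //=.
rewrite [X in _ + X]big1 ?addr0.
  rewrite big1 ?mul1r; last by move=> j _; rewrite ffunE /fracp Hf truncn_natr subrr subr0.
  by apply: Ucov_ext => j; rewrite ffunE Hf truncn_natr addn0.
move=> b Hb.
have [j Hj] : exists j, b j.
  apply/existsP; apply: contraNT Hb; rewrite negb_exists => /forallP H.
  by apply/eqP/ffunP => j; rewrite ffunE; apply/negbTE/H.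
by rewrite (bigD1 j) //= Hj /fracp Hf truncn_natr subrr mul0r mul0r.
Qed.

Definition qq (R : realType) (i x : 'I_2) : R := (i == x)%:R.

Lemma Ucov_qq (R : realType) i (m : 'I_2 -> nat) :
  Ucov (qq R) i m = if m i == 0%N then 2^-1 else 1.
Proof.
rewrite /Ucov (bigD1 i) //= [X in _ * (_ + X)]big1 ?addr0; last first.
  by move=> x Hx; rewrite /qq eq_sym (negbTE Hx) mul0r.
rewrite /qq eqxx mul1r (bigD1 i) //= big1 ?mulr1; last first.
  by move=> j Hj; rewrite (negbTE Hj) subr0 expr1n.
rewrite eqxx subrr expr0n; case: (m i == 0%N) => /=.
  by rewrite mulr1; field.
by rewrite mulr0 subr0.
Qed.

Definition g1 (j : 'I_2) : nat := if j == ord0 then 0%N else 2%N.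
Definition g2 (j : 'I_2) : nat := 2%N.
Definition g3 (j : 'I_2) : nat := if j == ord0 then 1%N else 2%N.
Definition mu0 (R : realType) (i : 'I_2) : R := if i == ord0 then 2^-1 else 1.

Lemma ef_nat (R : realType) (g : 'I_2 -> nat) :
  (1 <= g ord_max)%N ->
  (forall i j : 'I_2, (g j < g i)%N -> mu0 R i > (if g j == 0%N then 2^-1 else 1)) ->
  envy_free_eq (qq R) (mu0 R) (fun j => (g j)%:R).
Proof.
move=> H1 H2; split; first by move=> j; exact: ler0n.
split.
  move=> i; rewrite (@ucov_nat R 2 2 (qq R) _ _ (g)) // Ucov_qq /mu0.
  case: i => [[|[|?]] Hi] //=.
    by case: (_ == _); rewrite ?lexx // invf_le1 // ler1n.
  have -> : Ordinal Hi = ord_max by apply: val_inj.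
  by rewrite eqn0Ngt H1 lexx.
move=> [i [j [Hlt Hle]]].
move: Hle; rewrite (@ucov_nat R 2 2 (qq R) _ _ (fun l => g (tperm i j l))) // Ucov_qq tpermL.
rewrite ltr_nat in Hlt; have := H2 _ _ Hlt.
by move=> H /(lt_le_trans H); rewrite ltxx.
Qed.

Theorem theorem9 (R : realType) :
  exists (k n : nat) (q : 'I_k -> 'I_n -> R) (mu : 'I_k -> R),
    is_distribution q /\ (forall i, 0 <= mu i <= 1) /\
    ~ convex_set (envy_free_eq q mu).
Proof.
exists 2%N, 2%N, (qq R), (mu0 R); split.
  split; first by move=> i x; rewrite /qq ler0n.
  move=> i; rewrite (bigD1 i) //= big1 ?addr0 /qq ?eqxx //.
  by move=> x Hx; rewrite eq_sym (negbTE Hx).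
split.
  move=> i; rewrite /mu0; case: (_ == _); rewrite ?lexx ?ler01 //.
  by rewrite invr_ge0 ler0n invf_le1 // ler1n.
move=> Hc.
have E1 : envy_free_eq (qq R) (mu0 R) (fun j => (g1 j)%:R).
  apply: ef_nat => //.
  by case=> [[|[|?]] ?] //; case=> [[|[|?]] ?] //= _; rewrite /mu0 /= invf_lt1 // ltr1n.
have E2 : envy_free_eq (qq R) (mu0 R) (fun j => (g2 j)%:R).
  by apply: ef_nat => // i j; rewrite ltnn.
have := Hc _ _ (2^-1) E1 E2.
have H01 : 0 <= (2^-1 : R) <= 1 by rewrite invr_ge0 ler0n invf_le1 // ler1n.
move=> /(_ H01) [_ [_ Hne]]; apply: Hne.
have Hm : forall j, 2^-1 * (g1 j)%:R + (1 - 2^-1) * (g2 j)%:R = (g3 j)%:R :> R.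
  by case=> [[|[|?]] ?] //=; rewrite /g1 /g2 /g3 /=; field.
exists ord_max, ord0; split.
  by rewrite !Hm /g3 /= ltr_nat.
rewrite (@ucov_nat R 2 2 (qq R) _ _ (fun l => g3 (tperm ord_max ord0 l))); last by move=> l; rewrite /swap Hm.
by rewrite Ucov_qq tpermL /mu0 /g3 /=.
Qed.
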